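(* Let $d\ge 1$, let $\mathcal{O}=\{u_1,\dots,u_k\}$ be a set of $k\ge 1$ distinct unit vectors in $\mathbb{R}^d$, and let $\mathcal{C}_{\mathcal{O}}$ be the family of convex polyhedra defined by $\mathcal{O}$. Let $P\subset\mathbb{R}^d$ be a finite set of $n\ge 1$ points. Then there exists a point $p\in P$ such that $p\in C$ for every $C\in\mathcal{C}_{\mathcal{O}}$ with $|C\cap P|>(1-\frac{1}{k})n$.
   Context: For a unit vector $u\in\mathbb{R}^d$ and $t\in\mathbb{R}$, the closed halfspace $\{x\in\mathbb{R}^d:\langle u,x\rangle\le t\}$ is said to have orientation (outward normal) $u$. The family of convex polyhedra defined by $\mathcal{O}$, denoted $\mathcal{C}_{\mathcal{O}}$, is the family of all sets of the form $H_1\cap\dots\cap H_m$ ($m\ge 0$ finite; the empty intersection is $\mathbb{R}^d$), where each $H_j$ is a closed halfspace whose orientation belongs to $\mathcal{O}$. *)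

(* Defs.v *)
(* R^d is rendered as row vectors 'rV[R]_d over an arbitrary
   real field R (the statement is purely order-algebraic). *)
From HB Require Import structures.
From mathcomp Require Import all_boot all_order all_algebra.
Set Implicit Arguments. Unset Strict Implicit. Unset Printing Implicit Defensive.
Import Order.TTheory GRing.Theory Num.Theory.
Local Open Scope ring_scope.

Definition dotp (R : realFieldType) (d : nat) (u x : 'rV[R]_d) : R :=
  \sum_(i < d) u 0 i * x 0 i.

Definition unit_vec (R : realFieldType) (d : nat) (u : 'rV[R]_d) : Prop :=
  dotp u u = 1.

Definition halfspace (R : realFieldType) (d : nat) (u : 'rV[R]_d) (t : R)
  : pred 'rV[R]_d := fun x => dotp u x <= t.

Definition in_family (R : realFieldType) (d : nat) (O : seq 'rV[R]_d)
  (C : pred 'rV[R]_d) : Prop :=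
  exists hs : seq ('rV[R]_d * R),
    (forall h, h \in hs -> h.1 \in O) /\
    (forall x, C x = all (fun h => halfspace h.1 h.2 x) hs).

(* Main.v *)
Require Import Defs.
From HB Require Import structures.
From mathcomp Require Import all_boot all_order all_algebra.
From mathcomp Require Import zify.
Import Order.TTheory GRing.Theory Num.Theory.
Local Open Scope ring_scope.

Lemma count_has_le (T U : eqType) (a : U -> pred T) (s : seq U) (P : seq T)
  (n k : nat) :
  (forall u, u \in s -> (k * count (a u) P < n)%N) ->
  (k * count (fun x => has (fun u => a u x) s) P <= size s * n.-1)%N.
Proof.
elim: s => [|u s IH] H /=.
  by rewrite (eq_count (a2:=pred0)) // count_pred0 muln0.
have H1 := H u (mem_head _ _).
have H2 := IH (fun v hv => H v (mem_behead (s:=u::s) hv)).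
have H3 : (count (fun x => a u x || has (fun u0 => a u0 x) s) P <=
   count (a u) P + count (fun x => has (fun u0 => a u0 x) s) P)%N.
  rewrite -(count_predUI (a u) (fun x => has (fun u0 => a u0 x) s)).
  exact: leq_addr.
have H4 := leq_mul (leqnn k) H3.
rewrite mulnDr in H4.
rewrite mulSn.
lia.
Qed.

Theorem theorem1 (R : realFieldType) (d : nat) (O : seq 'rV[R]_d)
    (P : seq 'rV[R]_d) :
  (1 <= d)%N ->
  uniq O -> (1 <= size O)%N -> (forall u, u \in O -> unit_vec u) ->
  uniq P -> (1 <= size P)%N ->
  exists p, p \in P /\
    forall C : pred 'rV[R]_d, in_family O C ->
      (1 - (size O)%:R^-1) * (size P)%:R < (count C P)%:R :> R -> C p.
Proof.
move=> _ _ Hk _ _ Hn.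
set k := size O; set n := size P.
pose B (u : 'rV[R]_d) := fun p => (k * count (fun q => (dotp u p <= dotp u q)%R) P < n)%N.
pose bad p := has (fun u => B u p) O.
have HB : forall u, u \in O -> (k * count (B u) P < n)%N.
  move=> u _.
  case E: (filter (B u) P) => [|p0 s].
    move: (size_filter (B u) P); rewrite E /= => <-; rewrite muln0; lia.
  have [m mm mmin] : exists2 m, m \in filter (B u) P &
      forall y, y \in filter (B u) P -> dotp u m <= dotp u y.
    rewrite E; elim: s p0 {E} => [|q s IH] p0.
      by exists p0 => [|y]; rewrite ?mem_head // inE => /eqP ->.
    have [m mm mmin] := IH q.
    have [le|lt] := leP (dotp u p0) (dotp u m).
      exists p0; first exact: mem_head.
      move=> y; rewrite inE => /orP [/eqP ->//|/mmin]; exact: le_trans.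
    exists m; first by rewrite inE mm orbT.
    move=> y; rewrite inE => /orP [/eqP ->|/mmin//]; exact: ltW.
  move: mm; rewrite mem_filter => /andP [Bm _].
  apply: leq_ltn_trans Bm; rewrite leq_mul2l; apply/orP; right.
  rewrite (@eq_in_count _ _ (predI (B u) (mem P))); last first.
    by move=> y yP /=; rewrite yP andbT.
  apply: sub_count => y /andP [By yP] /=.
  by apply: mmin; rewrite mem_filter; apply/andP; split.
have Hbad : (count bad P < n)%N.
  have := @count_has_le _ _ B O P n k HB.
  rewrite -/k => Hle.
  have : (count bad P <= n.-1)%N.
    by rewrite -(leq_pmul2l (m:=k)) //; apply: leq_trans Hle _; rewrite mulnC.
  lia.
have : has (predC bad) P.
  rewrite has_count; have := count_predC bad P; rewrite -/n; lia.
move=> /hasP [p pP nbad]; exists p; split => //.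
move=> C [hs [hsO HC]] Hc.
have Hnc : (k * count (predC C) P < n)%N.
  have kpos : (0 < k%:R :> R) by rewrite ltr0n.
  have Hr : (k * n)%:R < (k * count C P + n)%:R :> R.
    rewrite natrM natrD.
    have := Hc; rewrite -(ltr_pM2l kpos) mulrA mulrBr mulr1 mulfV ?mul1r;
      last by rewrite pnatr_eq0 -lt0n.
    by rewrite natrM mulrBl mul1r ltrBlDr.
  rewrite ltr_nat in Hr.
  have := count_predC C P; rewrite -/n => Hs.
  rewrite -Hs mulnDr in Hr; lia.
rewrite HC; apply/allP => h hin.
rewrite /halfspace.
have [//|lt_tp] := leP (dotp h.1 p) h.2.
exfalso; move/negP: nbad; apply; apply/hasP; exists h.1; first exact: hsO.
apply: leq_ltn_trans Hnc; rewrite leq_mul2l; apply/orP; right.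
apply: sub_count => q Hq /=.
rewrite HC; apply/allPn; exists h => //.
by rewrite /halfspace -ltNge (lt_le_trans lt_tp Hq).
Qed.
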